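(* For all $n\ge0$ and $m>nt$, \[ \mathcal{L}^{(t)}_H\big(H^{(t)}_m(x)H^{(t)}_n(x)\big)=0 \quad\text{and}\quad \mathcal{L}^{(t)}_H\big(H^{(t)}_{nt}(x)H^{(t)}_n(x)\big)=\Big(\frac{t+1}{2}\Big)^{n}(nt)!. \]
   Context: Fix an integer $t\ge1$. A $t$-path in $K_n$ is a subgraph isomorphic to a path with $t$ edges. $H^{(t)}_n(x)=\sum_F(-1)^{|F|}x^{\,n-(t+1)|F|}$ over all families $F$ of pairwise vertex-disjoint $t$-paths in $K_n$ ($H^{(t)}_0=1$). Let $\mu^{(t)}_n$ be the number of coverings of all vertices of $K_n$ by pairwise vertex-disjoint $t$-paths ($\mu^{(t)}_0=1$), and let $\mathcal{L}^{(t)}_H$ be the linear functional with $\mathcal{L}^{(t)}_H(x^n)=\mu^{(t)}_n$. *)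

(* Defs.v *)
From HB Require Import structures.
From mathcomp Require Import all_boot all_order all_algebra.
Set Implicit Arguments. Unset Strict Implicit. Unset Printing Implicit Defensive.
Import Order.TTheory GRing.Theory Num.Theory.

(* Vertices of K_n are 'I_n; an edge is a 2-element set of vertices; a
   subgraph (without isolated vertices) is given by its edge set. *)

Definition path_edges (n t : nat) (f : {ffun 'I_t.+1 -> 'I_n}) : {set {set 'I_n}} :=
  [set [set f (inord i); f (inord i.+1)] | i : 'I_t].

(* P is a t-path in K_n: a subgraph isomorphic to a path with t edges,
   i.e. the edge set of some path through t+1 distinct vertices. *)
Definition is_tpath (n t : nat) (P : {set {set 'I_n}}) : bool :=
  [exists f : {ffun 'I_t.+1 -> 'I_n}, injectiveb f && (P == path_edges f)].

Definition verts (n : nat) (P : {set {set 'I_n}}) : {set 'I_n} :=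
  \bigcup_(e in P) e.

Definition is_tfamily (n t : nat) (F : {set {set {set 'I_n}}}) : bool :=
  [forall P in F, is_tpath t P] &&
  [forall P in F, forall Q in F, (P != Q) ==> [disjoint verts P & verts Q]].

Definition covers (n : nat) (F : {set {set {set 'I_n}}}) : bool :=
  \bigcup_(P in F) verts P == [set: 'I_n].

Local Open Scope ring_scope.

Definition Hpoly (t n : nat) : {poly rat} :=
  \sum_(F : {set {set {set 'I_n}}} | is_tfamily t F)
     (-1) ^+ #|F| *: 'X^(n - t.+1 * #|F|).

Definition mu (t n : nat) : nat :=
  #|[set F : {set {set {set 'I_n}}} | is_tfamily t F && covers F]|.

Definition LH (t : nat) (p : {poly rat}) : rat :=
  \sum_(i < size p) p`_i * (mu t i)%:R.

(* Main.v *)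
Require Import Defs.
From HB Require Import structures.
From mathcomp Require Import all_boot all_order all_algebra.
Set Implicit Arguments. Unset Strict Implicit. Unset Printing Implicit Defensive.
Import Order.TTheory GRing.Theory Num.Theory.
From Stdlib Require Import Lia ArithRing.

Ltac slia := repeat match goal with
  | |- is_true (_ <= _)%N => apply/ssrnat.leP
  | |- is_true (_ < _)%N => apply/ssrnat.ltP
  | |- is_true (_ == _)%N => apply/eqP
  | H: is_true (_ <= _)%N |- _ => move/ssrnat.leP in H
  | H : is_true (_ < _)%N |- _ => move/ssrnat.ltP in H
  | H : is_true (_ == _)%N |- _ => move/eqP in H
  end;
  repeat match goal with
  | H : context [subn _ _] |- _ => rewrite -minusE in H
  | H : context [addn _ _] |- _ => rewrite -plusE in H
  | H : context [muln _ _] |- _ => rewrite -multE in H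
  end;
  rewrite -?minusE -?plusE -?multE; lia.



Lemma set2_eq (T : finType) (a b c d : T) :
  [set a; b] = [set c; d] -> (a = c /\ b = d) \/ (a = d /\ b = c).
Proof.
move=> E.
have ha : a \in [set c; d] by rewrite -E set21.
have hb : b \in [set c; d] by rewrite -E set22.
have hc : c \in [set a; b] by rewrite E set21.
have hd : d \in [set a; b] by rewrite E set22.
case/set2P: ha => ha; case/set2P: hb => hb; subst; auto;
case/set2P: hc => hc; case/set2P: hd => hd; subst; auto.
Qed.


Lemma arith_path (t : nat) (p : nat -> nat) :
  (0 < t)%coq_nat ->
  (forall j, (j < t)%coq_nat -> p j.+1 = (p j).+1 \/ p j = (p j.+1).+1) ->
  (forall i j, (i <= t)%coq_nat -> (j <= t)%coq_nat -> p i = p j -> i = j) ->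
  (forall j, (j <= t)%coq_nat -> (p j <= t)%coq_nat) ->
  (forall j, (j <= t)%coq_nat -> p j = j) \/ (forall j, (j <= t)%coq_nat -> p j = (t - j)%coq_nat).
Proof.
move=> t0 adj inj bnd.
case: (adj 0 t0) => h0.
- have H : forall m j, (j <= m)%coq_nat -> (j <= t)%coq_nat -> p j = (p 0 + j)%coq_nat.
    elim=> [|m IH] j hjm hj; first by have E : j = 0 by [lia]; rewrite E; lia.
    have [E|ne] : j = m.+1 \/ (j <= m)%coq_nat by [lia]; last by apply: IH; lia.
    subst j.
    case: m IH hjm hj => [|m] IH hjm hj; first lia.
    have IH1 := IH m.+1 (le_n _) (ltac:(lia) : (m.+1 <= t)%coq_nat).
    have IH0 := IH m (ltac:(lia) : (m <= m.+1)%coq_nat) (ltac:(lia) : (m <= t)%coq_nat).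
    case: (adj m.+1 (ltac:(lia) : (m.+1 < t)%coq_nat)) => hh; first lia.
    have := inj m m.+2 (ltac:(lia) : (m <= t)%coq_nat) (ltac:(lia) : (m.+2 <= t)%coq_nat); lia.
  left => j hj; have := H j j (le_n _) hj; have := H t t (le_n t) (le_n t);
  have := bnd t (le_n t); lia.
- have H : forall m j, (j <= m)%coq_nat -> (j <= t)%coq_nat -> (p j + j)%coq_nat = p 0.
    elim=> [|m IH] j hjm hj; first by have E : j = 0 by [lia]; rewrite E; lia.
    have [E|ne] : j = m.+1 \/ (j <= m)%coq_nat by [lia]; last by apply: IH; lia.
    subst j.
    case: m IH hjm hj => [|m] IH hjm hj; first lia.
    have IH1 := IH m.+1 (le_n _) (ltac:(lia) : (m.+1 <= t)%coq_nat).
    have IH0 := IH m (ltac:(lia) : (m <= m.+1)%coq_nat) (ltac:(lia) : (m <= t)%coq_nat).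
    case: (adj m.+1 (ltac:(lia) : (m.+1 < t)%coq_nat)) => hh; last lia.
    have := inj m m.+2 (ltac:(lia) : (m <= t)%coq_nat) (ltac:(lia) : (m.+2 <= t)%coq_nat); lia.
  right => j hj; have := H j j (le_n _) hj; have := H t t (le_n t) (le_n t);
  have := bnd 0 ltac:(lia); lia.
Qed.

Section Paths.
Variables (n t : nat).
Hypothesis ht : (0 < t)%N.
Local Notation s := t.+1.
Local Notation V := 'I_n.
Local Notation pth := {ffun 'I_s -> V}.

Lemma pe_memP (f : pth) e :
  reflect (exists i : 'I_t, e = [set f (inord i); f (inord i.+1)]) (e \in path_edges f).
Proof.
apply: (iffP imsetP) => [[i _ ->]|[i ->]]; first by exists i.
by exists i.
Qed.

Lemma pe_mem (f : pth) (i : 'I_t) : [set f (inord i); f (inord i.+1)] \in path_edges f.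
Proof. by apply/pe_memP; exists i. Qed.

Lemma vertsE (f : pth) : verts (path_edges f) = [set f j | j in 'I_s].
Proof.
apply/setP => v; apply/bigcupP/imsetP => [[e /pe_memP[i ->]]|[j _ ->]].
  by case/set2P => ->; eexists.
have [jt|] := ltnP j t.
  exists [set f (inord j); f (inord j.+1)]; first by apply/pe_memP; exists (Ordinal jt).
  by rewrite inord_val set21.
rewrite leq_eqVlt ltnNge -ltnS ltn_ord orbF => /eqP jt.
exists [set f (inord t.-1); f (inord t.-1.+1)].
  have h : (t.-1 < t)%N by rewrite prednK // ltnSn.
  by apply/pe_memP; exists (Ordinal h).
rewrite prednK //.
have -> : inord t = j :> 'I_s by apply/val_inj; rewrite /= inordK // jt.
by rewrite set22.
Qed.


Definition frev (f : pth) : pth := [ffun i => f (rev_ord i)].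

Lemma frev_edge (f : pth) (i : 'I_t) :
  [set frev f (inord i); frev f (inord i.+1)] =
  [set f (inord (rev_ord i)); f (inord (rev_ord i).+1)].
Proof.
rewrite !ffunE setUC; congr ([set f _; f _]); apply/val_inj;
have := ltn_ord i; move=> hi; rewrite /= !inordK ?subSS //=; slia.
Qed.

Lemma pe_rev (f : pth) : path_edges (frev f) = path_edges f.
Proof.
apply/setP => e; apply/pe_memP/pe_memP => [[i ->]|[i ->]].
  by exists (rev_ord i); rewrite frev_edge.
by exists (rev_ord i); rewrite frev_edge rev_ordK.
Qed.


Lemma frev_inj (f : pth) : injective f -> injective (frev f).
Proof. by move=> fi a b; rewrite !ffunE => /fi /rev_ord_inj. Qed.

Lemma pe_inj (f g : pth) : injective f -> injective g ->
  path_edges f = path_edges g -> g = f \/ g = frev f.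
Proof.
move=> fi gi E.
have hv : forall j, exists k, f k = g j.
  move=> j; have : g j \in verts (path_edges g) by rewrite vertsE imset_f.
  by rewrite -E vertsE => /imsetP[k _ ->]; exists k.
case/fin_all_exists: hv => sg hsg.
pose p j := nat_of_ord (sg (inord j)).
have adj : forall j, (j < t)%coq_nat -> p j.+1 = (p j).+1 \/ p j = (p j.+1).+1.
  move=> j /ssrnat.ltP jt.
  have := pe_mem g (Ordinal jt); rewrite -E => /pe_memP[k].
  rewrite -!hsg /= => /set2_eq[[/fi e1 /fi e2]|[/fi e1 /fi e2]].
    by left; rewrite /p e1 e2 !inordK // ltnS ?ltn_ord // ltnW.
  by right; rewrite /p e1 e2 !inordK // ltnS ?ltn_ord // ltnW.
have inj : forall i j, (i <= t)%coq_nat -> (j <= t)%coq_nat -> p i = p j -> i = j.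
  move=> i j /ssrnat.leP hi /ssrnat.leP hj /val_inj.
  move=> /(congr1 f); rewrite !hsg => /gi /(congr1 val).
  by rewrite /= !inordK.
have bnd : forall j, (j <= t)%coq_nat -> (p j <= t)%coq_nat.
  by move=> j _; apply/ssrnat.leP; rewrite -ltnS ltn_ord.
case: (arith_path (ssrnat.ltP ht) adj inj bnd) => H; [left|right];
  apply/ffunP => j; rewrite ?ffunE -hsg; congr (f _); apply/val_inj.
  by have := H j (ssrnat.leP (ltn_ord j : (j <= t)%N)); rewrite /p inord_val.
by have := H j (ssrnat.leP (ltn_ord j : (j <= t)%N)); rewrite /p inord_val /= subSS.
Qed.

Lemma card_pe (f : pth) : injective f ->
  #|[set g : pth | injectiveb g && (path_edges g == path_edges f)]| = 2.
Proof.
move=> fi.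
have -> : [set g : pth | injectiveb g && (path_edges g == path_edges f)] = [set f; frev f].
  apply/setP => g; rewrite !inE; apply/andP/orP.
    case=> /injectiveP gi /eqP E.
    by case: (pe_inj fi gi (esym E)) => ->; [left|right].
  case=> /eqP ->; split; rewrite ?pe_rev //; apply/injectiveP => //.
  exact: frev_inj.
rewrite cards2; case: eqP => // E.
have := congr1 (fun h : pth => h ord0) E; rewrite ffunE => /fi /(congr1 val) /=.
by rewrite subn1 /= => t0; move: ht; rewrite -t0.
Qed.

End Paths.


Lemma card_fib (T U : finType) (A : {set T}) (B : {set U}) (p : T -> U) :
  (forall x, x \in A -> p x \in B) ->
  #|A| = \sum_(b in B) #|[set x in A | p x == b]|.
Proof.
move=> hp; rewrite -sum1_card (partition_big p (mem B)) //=.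
apply: eq_bigr => b _; rewrite -sum1_card; apply: eq_bigl => x.
by rewrite !inE.
Qed.

Section Fam.
Variables (n t : nat).
Hypothesis ht : (0 < t)%N.
Local Notation s := t.+1.
Local Notation V := 'I_n.
Local Notation pth := {ffun 'I_s -> V}.

Lemma fam_path (F : {set {set {set V}}}) P : is_tfamily t F -> P \in F ->
  exists f : pth, injective f /\ P = path_edges f.
Proof.
case/andP => /forallP h _ PF; have := h P; rewrite PF /= => /existsP[f /andP[/injectiveP fi /eqP ->]].
by exists f.
Qed.

Lemma fam_disj (F : {set {set {set V}}}) P Q : is_tfamily t F -> P \in F -> Q \in F ->
  P != Q -> [disjoint verts P & verts Q].
Proof.
case/andP => _ /forallP h PF QF PQ; have := h P; rewrite PF /= => /forallP/(_ Q).
by rewrite QF PQ.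
Qed.

End Fam.

Section Count.
Variables (n t k : nat).
Hypothesis ht : (0 < t)%N.
Local Notation s := t.+1.
Local Notation V := 'I_n.
Local Notation pth := {ffun 'I_s -> V}.
Local Notation gT := {ffun 'I_k * 'I_s -> V}.

Definition rowf (g : gT) (i : 'I_k) : pth := [ffun j => g (i, j)].
Definition psi (g : gT) : {ffun 'I_k -> {set {set V}}} := [ffun i => path_edges (rowf g i)].
Definition Phi (g : gT) : {set {set {set V}}} := [set path_edges (rowf g i) | i : 'I_k].
Definition Gs : {set gT} := [set g : gT | injectiveb g].

Lemma rowf_inj (g : gT) i : injective g -> injective (rowf g i).
Proof. by move=> gi a b; rewrite !ffunE => /gi [->]. Qed.

Lemma verts_rowf (g : gT) i : verts (path_edges (rowf g i)) = [set g (i, j) | j in 'I_s].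
Proof. by rewrite vertsE //; apply/setP => v; apply/imsetP/imsetP => -[j _ ->]; exists j; rewrite ?ffunE. Qed.

Lemma rows_disj (g : gT) i i' : injective g -> i != i' ->
  [disjoint verts (path_edges (rowf g i)) & verts (path_edges (rowf g i'))].
Proof.
move=> gi ii; rewrite !verts_rowf; apply/pred0P => v /=.
apply/negbTE/negP => /andP[/imsetP[j _ ->] /imsetP[j' _ /gi [e _]]].
by rewrite e eqxx in ii.
Qed.

Lemma psi_inj (g : gT) : injective g -> injective (psi g).
Proof.
move=> gi i i'; rewrite !ffunE => E; apply/eqP; apply: contraTT isT => ii.
have := rows_disj gi ii; rewrite E => /pred0P/(_ (g (i', ord0))) /=.
rewrite andbb verts_rowf; suff -> : g (i', ord0) \in [set g (i', j) | j in 'I_s] by [].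
by apply/imsetP; exists ord0.
Qed.

Lemma Phi_psi (g : gT) : Phi g = [set psi g i | i : 'I_k].
Proof. by apply: eq_imset => i; rewrite ffunE. Qed.

Lemma card_Phi (g : gT) : injective g -> #|Phi g| = k.
Proof. by move=> gi; rewrite Phi_psi card_imset ?card_ord //; apply: psi_inj. Qed.

Lemma Phi_fam (g : gT) : injective g -> is_tfamily t (Phi g).
Proof.
move=> gi; apply/andP; split; apply/forallP => P; apply/implyP => /imsetP[i _ ->].
  by apply/existsP; exists (rowf g i); rewrite eqxx andbT; apply/injectiveP/rowf_inj.
apply/forallP => Q; apply/implyP => /imsetP[i' _ ->]; apply/implyP => ne.
apply: rows_disj => //; apply: contraNneq ne => ->; done.
Qed.


Lemma foldr_const (T : Type) (l : seq T) c :
  foldr muln 1 [seq c | _ <- l] = c ^ size l.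
Proof. by elim: l => //= x l ->; rewrite expnS. Qed.

Lemma fiber (F : {set {set {set V}}}) : is_tfamily t F -> #|F| = k ->
  #|[set g in Gs | Phi g == F]| = k`! * 2 ^ k.
Proof.
move=> fF cF.
pose Hs := [set h : {ffun 'I_k -> {set {set V}}} in ffun_on [pred P | P \in F] | injectiveb h].
have cHs : #|Hs| = k`!.
  by rewrite card_inj_ffuns_on card_ord -ffactnn -cF; congr (_ ^_ _); apply: eq_card.
rewrite (@card_fib _ _ _ Hs psi); last first.
  move=> g; rewrite !inE => /andP[/injectiveP gi /eqP PF]; apply/andP; split.
    by apply/ffun_onP => i; rewrite inE -PF Phi_psi imset_f.
  by apply/injectiveP/psi_inj.
rewrite -cHs -sum_nat_const; apply: eq_bigr => h; rewrite inE => /andP[hon /injectiveP hi].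
have hF : forall i, h i \in F by move=> i; move/ffun_onP: hon => /(_ i); rewrite inE.
transitivity #|[set g in Gs | psi g == h]|.
  apply: eq_card => g; rewrite !inE; case gi: (injectiveb g) => //=.
  case E: (psi g == h); rewrite ?andbF ?andbT //; move/eqP: E => E.
  rewrite Phi_psi E eqEcard; apply/andP; split.
    by apply/subsetP => P /imsetP[i _ ->].
  by rewrite card_imset // card_ord cF.
pose R i := [set f : pth | injectiveb f && (path_edges f == h i)].
pose S := [set r : {ffun 'I_k -> pth} | [forall i, r i \in R i]].
pose u (r : {ffun 'I_k -> pth}) : gT := [ffun p => r p.1 p.2].
have uinj : injective u.
  move=> r r' E; apply/ffunP => i; apply/ffunP => j.
  by have := congr1 (fun g : gT => g (i, j)) E; rewrite !ffunE.
have -> : [set g in Gs | psi g == h] = u @: S.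
  apply/setP => g; rewrite !inE; apply/andP/imsetP.
  - case=> /injectiveP gi /eqP E; exists [ffun i => rowf g i].
      rewrite inE; apply/forallP => i; rewrite ffunE inE; apply/andP; split.
        by apply/injectiveP/rowf_inj.
      by rewrite -E ffunE.
    by apply/ffunP => -[i j]; rewrite !ffunE.
  - case=> r; rewrite inE => /forallP rS ->.
    have rR i : injective (r i) /\ path_edges (r i) = h i.
      by have := rS i; rewrite inE => /andP[/injectiveP ? /eqP ?].
    split.
      apply/injectiveP => -[i j] [i' j']; rewrite !ffunE /=.
      case: (eqVneq i i') => [<-|ne] e; first by move: (rR i).1 e => ri /ri ->.
      have hne : h i != h i' by apply/eqP => /hi /eqP; rewrite (negbTE ne).
      have := fam_disj fF (hF i) (hF i') hne; rewrite -(rR i).2 -(rR i').2 !vertsE //.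
      have m1 : r i j \in [set r i x | x in 'I_s] by apply/imsetP; exists j.
      have m2 : r i j \in [set r i' x | x in 'I_s] by rewrite e; apply/imsetP; exists j'.
      by move/pred0P/(_ (r i j)); rewrite /= m1 m2.
    apply/eqP/ffunP => i; rewrite !ffunE -(rR i).2; congr path_edges.
    by apply/ffunP => j; rewrite !ffunE.
rewrite card_imset // (_ : #|S| = #|(family R : simpl_pred {ffun 'I_k -> pth})|); last first.
  by apply: eq_card => r; rewrite inE; apply/forallP/familyP.
rewrite card_family (_ : [seq #|R x| | x : 'I_k] = [seq 2 | _ <- enum 'I_k]).
  by rewrite foldr_const size_enum_ord.
apply: eq_map => i; have [f0 [f0i e]] := fam_path fF (hF i).
by rewrite /R e card_pe.
Qed.

End Count.

Section Main.
Variables (n t : nat).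
Hypothesis ht : (0 < t)%N.
Local Notation s := t.+1.

Definition Fams k := [set F : {set {set {set 'I_n}}} | is_tfamily t F && (#|F| == k)].

Lemma count_fam k : #|Fams k| * (k`! * 2 ^ k) = n ^_ (k * s).
Proof.
have cG : #|Gs n t k| = n ^_ (k * s) by rewrite /Gs card_inj_ffuns card_prod !card_ord.
rewrite -cG (@card_fib _ _ _ (Fams k) (@Phi n t k)); last first.
  move=> g; rewrite !inE => /injectiveP gi.
  by rewrite Phi_fam // card_Phi // eqxx.
rewrite (eq_bigr (fun _ => k`! * 2 ^ k)) ?sum_nat_const //.
move=> F; rewrite inE => /andP[fF /eqP cF]; exact: fiber.
Qed.

Lemma exists_g (F : {set {set {set 'I_n}}}) : is_tfamily t F ->
  exists g : {ffun 'I_#|F| * 'I_s -> 'I_n}, injective g /\ Phi g = F.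
Proof.
move=> fF; have := fiber ht fF (erefl _).
have : 0 < #|F|`! * 2 ^ #|F| by rewrite muln_gt0 fact_gt0 expn_gt0.
move=> /[swap] <- /card_gt0P[g]; rewrite !inE => /andP[/injectiveP gi /eqP e].
by exists g.
Qed.

Lemma fam_bound (F : {set {set {set 'I_n}}}) : is_tfamily t F -> (#|F| * s <= n)%N.
Proof.
move=> fF; rewrite -ffact_gt0 -count_fam !muln_gt0 fact_gt0 expn_gt0 /= andbT.
by apply/card_gt0P; exists F; rewrite inE fF eqxx.
Qed.

Lemma covers_iff (F : {set {set {set 'I_n}}}) : is_tfamily t F -> covers F = (#|F| * s == n).
Proof.
move=> fF; have [g [gi <-]] := exists_g fF.
rewrite /covers (_ : \bigcup_(P in Phi g) verts P = [set g x | x in [set: 'I_#|F| * 'I_s]]).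
  rewrite eqEcard subsetT cardsT card_ord card_imset // cardsT card_prod !card_ord /=.
  by rewrite card_Phi // eqn_leq fam_bound.
apply/setP => v; apply/bigcupP/imsetP.
  case=> P /imsetP[i _ ->]; rewrite verts_rowf // => /imsetP[j _ ->].
  by exists (i, j).
case=> -[i j] _ ->; exists (path_edges (rowf g i)); first by apply/imsetP; exists i.
by rewrite verts_rowf //; apply/imsetP; exists j.
Qed.

End Main.




Lemma ffactD m a b : (m ^_ (a + b) = m ^_ a * (m - a) ^_ b)%N.
Proof.
elim: b => [|b IH]; first by rewrite addn0 ffactn0 muln1.
by rewrite addnS !ffactnSr IH subnDA mulnA.
Qed.

Lemma ffactS1 m N : ((m.+1) ^_ N.+1 = m ^_ N.+1 + N.+1 * m ^_ N)%N.
Proof.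
rewrite ffactSS ffactnSr.
have [le|lt] := leqP N m.
  by rewrite [N.+1 * _]mulnC -mulnDr addnS subnK // mulnC.
by rewrite ffact_small // !muln0 mul0n.
Qed.

Local Open Scope ring_scope.

Lemma sum_ext (R : zmodType) N1 N2 (F : nat -> R) : (N1 <= N2)%N ->
  (forall i, (N1 <= i)%N -> F i = 0) ->
  \sum_(i < N1) F i = \sum_(i < N2) F i.
Proof.
move=> h hz; rewrite (big_ord_widen _ _ h) big_mkcond /=; apply: eq_bigr => i _.
by case: ifP => // /negbT; rewrite -leqNgt => /hz ->.
Qed.

Lemma fr_scale (x y z : nat) : (z != 0)%N ->
  x%:R / y%:R = (x * z)%:R / (y * z)%:R :> rat.
Proof.
move=> z0; rewrite !natrM invfM mulrACA divff ?mulr1 //.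
by rewrite pnatr_eq0.
Qed.

Section Alg.
Variable t : nat.
Hypothesis ht : (0 < t)%N.
Local Notation s := t.+1.

Definition Ac (m k : nat) : rat := (m ^_ (k * s))%:R / (k`! * 2 ^ k)%:R.
Definition term (m k : nat) : {poly rat} := ((-1) ^+ k * Ac m k) *: 'X^(m - k * s).
Definition Hc (m : nat) : {poly rat} := \sum_(k < m.+1) term m k.
Definition muc (j : nat) : rat := \sum_(k < j.+1) ((k * s)%N == j)%:R * Ac j k.

Lemma den_neq0 k : (k`! * 2 ^ k)%:R != 0 :> rat.
Proof. by rewrite pnatr_eq0 muln_eq0 negb_or -!lt0n fact_gt0 expn_gt0. Qed.

Lemma Ac_small m k : (m < k * s)%N -> Ac m k = 0.
Proof. by move=> h; rewrite /Ac ffact_small // mul0r. Qed.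

Lemma Ac0 m : Ac m 0 = 1.
Proof. by rewrite /Ac mul0n ffactn0 /= divr1. Qed.

Lemma term_small m k : (m < k * s)%N -> term m k = 0.
Proof. by move=> h; rewrite /term Ac_small // mulr0 scale0r. Qed.

Lemma Hc_ext m N : (m < N)%N -> Hc m = \sum_(k < N) term m k.
Proof.
move=> h; apply: sum_ext => // i hi; apply: term_small.
by rewrite (leq_trans hi) // leq_pmulr.
Qed.


Lemma Ac_rec m k :
  Ac m.+1 k.+1 = Ac m k.+1 + (s%:R / 2%:R) * (m ^_ t)%:R * Ac (m - t) k.
Proof.
rewrite /Ac.
have eN : (k.+1 * s = (t + k * s).+1)%N by rewrite mulSn addSn.
have ed : (k.+1`! * 2 ^ k.+1 = 2 * (k`! * 2 ^ k) * k.+1)%N.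
  by rewrite factS expnS -!multE; ring.
rewrite -[((m ^_ t)%:R : rat)]divr1 [_ * (_ / 1)]mulf_div mulf_div -!natrM.
rewrite mulr1 -natrM [X in _ + X](@fr_scale _ _ k.+1) // -ed -mulrDl -natrD.
congr (_%:R / _); rewrite eN ffactS1 -(mulnA s) -ffactD -!multE -!plusE; ring.
Qed.


Lemma term_rec m k : term m.+1 k.+1 =
  'X * term m k.+1 - ((s%:R / 2%:R) * (m ^_ t)%:R) *: term (m - t) k.
Proof.
have [le|lt] := leqP (k.+1 * s)%N m.
  have e1 : (m.+1 - k.+1 * s = (m - k.+1 * s).+1)%N by rewrite subSn.
  have e2 : (m - t - k * s = (m - k.+1 * s).+1)%N.
    by move: le; rewrite mulSn => le; slia.
  rewrite /term e1 e2 -scalerAr -exprS scalerA -scalerBl; congr (_ *: _).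
  rewrite Ac_rec exprS mulN1r !mulNr mulrDr opprD; congr (_ - _).
  by rewrite mulrCA.
rewrite (term_small lt) mulr0 sub0r.
have [eq|lt2] := eqVneq m.+1 (k.+1 * s)%N.
  have e2 : (m - t - k * s = 0)%N by move: eq; rewrite mulSn => eq; slia.
  have e1 : (m.+1 - k.+1 * s = 0)%N by rewrite eq subnn.
  rewrite /term e1 e2 scalerA -scaleNr; congr (_ *: _).
  rewrite Ac_rec Ac_small // add0r exprS mulN1r !mulNr; congr (- _).
  by rewrite mulrCA.
have lt3 : (m.+1 < k.+1 * s)%N by rewrite ltn_neqAle lt2 lt.
have z : (m ^_ t)%:R * Ac (m - t) k = 0.
  rewrite /Ac mulrA -natrM -ffactD ffact_small ?mul0r //.
rewrite term_small // /term scalerA.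
rewrite (_ : (s%:R / 2%:R * (m ^_ t)%:R) * ((-1) ^+ k * Ac (m - t) k) = 0) ?scale0r ?oppr0 //.
by rewrite mulrCA -!mulrA z !mulr0.
Qed.

Lemma Hc_rec m :
  Hc m.+1 = 'X * Hc m - ((s%:R / 2%:R) * (m ^_ t)%:R) *: Hc (m - t).
Proof.
rewrite (@Hc_ext m m.+2) // (@Hc_ext (m - t) m.+1) ?ltnS ?leq_subr //.
rewrite /Hc big_ord_recl [X in 'X * X]big_ord_recl mulrDr mulr_sumr scaler_sumr.
rewrite -addrA -sumrB; congr (_ + _).
  by rewrite /term !Ac0 !mulr1 !expr0 !scale1r mul0n !subn0 exprS.
by apply: eq_bigr => i _; rewrite lift0 term_rec.
Qed.


Lemma Hc_coef_gt n i : (n < i)%N -> (Hc n)`_i = 0.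
Proof.
move=> h; rewrite /Hc coef_sum big1 // => k _; rewrite coefZ coefXn.
rewrite (_ : (i == n - k * s)%N = false) ?mulr0 //; apply/negbTE.
by rewrite neq_ltn (leq_ltn_trans (leq_subr _ _) h) orbT.
Qed.

Lemma size_Hc n : (size (Hc n) <= n.+1)%N.
Proof. by apply/leq_sizeP => i hi; apply: Hc_coef_gt. Qed.

Lemma Hc_lead n : (Hc n)`_n = 1.
Proof.
rewrite /Hc coef_sum big_ord_recl big1.
  by rewrite addr0 /term coefZ coefXn Ac0 mul0n subn0 eqxx !mulr1.
move=> k _; rewrite /term lift0 coefZ coefXn.
have [lt|le] := ltnP n (k.+1 * s)%N; first by rewrite Ac_small // mulr0 mul0r.
rewrite (_ : (n == n - k.+1 * s)%N = false) ?mulr0 //; apply/negbTE.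
rewrite neq_ltn ltn_subrL muln_gt0 /= (leq_trans _ le) ?orbT // muln_gt0.
Qed.

Definition Lc (p : {poly rat}) : rat := \sum_(i < size p) p`_i * muc i.

Lemma Lc_ext (p : {poly rat}) N : (size p <= N)%N -> Lc p = \sum_(i < N) p`_i * muc i.
Proof.
move=> h; rewrite /Lc (sum_ext (F := fun i => p`_i * muc i) h) // => i hi.
by rewrite nth_default ?mul0r.
Qed.

Lemma LcD (p q : {poly rat}) : Lc (p + q) = Lc p + Lc q.
Proof.
rewrite !(@Lc_ext _ (maxn (size p) (size q))) ?leq_maxl ?leq_maxr ?size_polyD //.
by rewrite -big_split; apply: eq_bigr => i _; rewrite coefD mulrDl.
Qed.

Lemma LcZ c (p : {poly rat}) : Lc (c *: p) = c * Lc p.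
Proof.
rewrite !(@Lc_ext _ (size p)) ?size_scale_leq // mulr_sumr.
by apply: eq_bigr => i _; rewrite coefZ mulrA.
Qed.

Lemma Lc0 : Lc 0 = 0.
Proof. by rewrite /Lc size_poly0 big_ord0. Qed.

Lemma LcB (p q : {poly rat}) : Lc (p - q) = Lc p - Lc q.
Proof. by rewrite LcD -scaleN1r LcZ mulN1r. Qed.

Lemma Lc_sum N (F : 'I_N -> {poly rat}) : Lc (\sum_(i < N) F i) = \sum_(i < N) Lc (F i).
Proof.
elim: N F => [|N IH] F; first by rewrite !big_ord0 Lc0.
by rewrite !big_ord_recr /= LcD IH.
Qed.

Lemma LcXn i : Lc 'X^i = muc i.
Proof.
rewrite (@Lc_ext _ i.+1) ?size_polyXn // big_ord_recr /= big1.
  by rewrite add0r coefXn eqxx mul1r.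
by move=> j _; rewrite coefXn ltn_eqF ?mul0r //.
Qed.

Lemma muc_mul l : muc (l * s)%N = Ac (l * s)%N l.
Proof.
have hl : (l < (l * s).+1)%N by rewrite ltnS leq_pmulr.
rewrite /muc (bigD1 (Ordinal hl)) //= eqxx mul1r big1 ?addr0 // => k hk.
rewrite (_ : (k * s == l * s)%N = false) ?mul0r //; apply/negbTE.
rewrite eqn_pmul2r //; apply: contra hk => /eqP e; apply/eqP/val_inj.
Qed.

Lemma muc_ndvd j : ~~ (s %| j)%N -> muc j = 0.
Proof.
move=> h; rewrite /muc big1 // => k _.
rewrite (_ : (k * s == j)%N = false) ?mul0r //; apply/negbTE.
by apply: contra h => /eqP <-; rewrite dvdn_mull.
Qed.


Lemma prod_Ac q k : (k <= q)%N ->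
  Ac (q * s)%N k * Ac ((q - k) * s)%N (q - k) =
  ('C(q, k))%:R * (((q * s)`!)%:R / (q`! * 2 ^ q)%:R).
Proof.
move=> hk; rewrite /Ac ffactnn mulf_div -[(('C(q,k))%:R : rat)]divr1 mulf_div -!natrM.
rewrite mul1r.
apply/eqP; rewrite eqr_div ?pnatr_eq0 ?muln_eq0 ?negb_or -?lt0n ?fact_gt0 ?expn_gt0 //.
rewrite -!natrM eqr_nat; apply/eqnP.
have e1 : ((q * s) ^_ (k * s) * ((q - k) * s)`! = (q * s)`!)%N.
  by rewrite mulnBl ffact_fact // leq_mul2r hk orbT.
have e2 := bin_fact hk.
have e3 : (2 ^ k * 2 ^ (q - k) = 2 ^ q)%N by rewrite -expnD subnKC.
rewrite e1 -{1}e2 -{1}e3 -!multE.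
move: ((q * s)%coq_nat)`! ((q - k)%N)`! k`! (2 ^ k)%N (2 ^ (q - k))%N (binomial q k) => a b c d e f; ring.
Qed.

Lemma LHc m : Lc (Hc m) = (m == 0)%:R.
Proof.
rewrite /Hc Lc_sum.
under eq_bigr => k _ do rewrite /term LcZ LcXn.
case: (boolP (s %| m)%N) => [/dvdnP[q ->]|nd]; last first.
  rewrite big1; last first.
    move=> k _; have [le|lt] := leqP (k * s) m; last by rewrite Ac_small ?mulr0 ?mul0r.
    rewrite muc_ndvd ?mulr0 //; apply: contra nd => h.
    by rewrite -(subnK le) dvdn_add // dvdn_mull.
  rewrite (_ : (m == 0)%N = false) //; apply: contraNF nd => /eqP ->.
  by rewrite dvdn0.
set W := (((q * s)`!)%:R / (q`! * 2 ^ q)%:R) : rat.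
rewrite -(@sum_ext _ q.+1 _ (fun k => (-1) ^+ k * Ac (q * s) k * muc (q * s - k * s))); last first.
- by move=> i hi; rewrite Ac_small ?mulr0 ?mul0r // ltn_pmul2r.
- by rewrite ltnS leq_pmulr.
rewrite (eq_bigr (fun k : 'I_q.+1 => ((-1) ^+ k * ('C(q, k))%:R) * W)); last first.
  move=> k _; rewrite -mulnBl muc_mul -mulrA prod_Ac ?mulrA //.
  by rewrite -ltnS.
rewrite -mulr_suml.
have -> : \sum_(i < q.+1) (-1) ^+ i * ('C(q, i))%:R = (1 - 1) ^+ q :> rat.
  by rewrite exprBn; apply: eq_bigr => i _; rewrite !expr1n !mulr1 mulr_natr.
rewrite subrr expr0n.
case: q @W => [|q] W /=.
  by rewrite /W mul0n fact0 expn0 muln1 divr1.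
by rewrite mul0r.
Qed.


Definition Tc j m := Lc ('X^j * Hc m).

Lemma Tc_rec j m :
  Tc j.+1 m = Tc j m.+1 + ((s%:R / 2%:R) * (m ^_ t)%:R) * Tc j (m - t).
Proof.
rewrite /Tc exprS -mulrA mulrCA.
have -> : 'X * Hc m = Hc m.+1 + ((s%:R / 2%:R) * (m ^_ t)%:R) *: Hc (m - t).
  by rewrite Hc_rec subrK.
by rewrite mulrDr LcD -scalerAr LcZ.
Qed.

Lemma TcA j m : (t * j < m)%N -> Tc j m = 0.
Proof.
elim: j m => [|j IH] m h.
  by rewrite /Tc expr0 mul1r LHc; move: h; rewrite muln0 lt0n => /negbTE ->.
rewrite Tc_rec !IH ?mulr0 ?addr0 //.
  by move: h; rewrite mulnS => h; slia.
by move: h; rewrite mulnS => h; slia.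
Qed.

Lemma TcB j : Tc j (j * t)%N = (s%:R / 2%:R) ^+ j * ((j * t)`!)%:R.
Proof.
elim: j => [|j IH].
  by rewrite /Tc expr0 mul1r mul0n LHc expr0 mul1r.
rewrite Tc_rec TcA; last by rewrite mulnC ltnS leq_pmul2r // leqnSn.
rewrite add0r (_ : (j.+1 * t - t = j * t)%N); last by rewrite mulSn addKn.
rewrite IH exprS -!mulrA; congr (_ * (_ * _)).
rewrite mulrCA; congr (_ * _); rewrite -natrM; congr (_%:R).
rewrite (_ : (j * t)%N = (j.+1 * t - t)%N) ?ffact_fact //.
  by rewrite mulSn leq_addr.
by rewrite mulSn addKn.
Qed.

Lemma poly_expand (p : {poly rat}) N : (size p <= N)%N ->
  p = \sum_(i < N) p`_i *: 'X^i.
Proof.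
move=> h; rewrite -[X in X = _](coefK p) poly_def.
by rewrite (sum_ext (F := fun i => p`_i *: 'X^i) h) // => i hi; rewrite nth_default ?scale0r.
Qed.

Lemma Lc_prod m n : Lc (Hc m * Hc n) = \sum_(i < n.+1) (Hc n)`_i * Tc i m.
Proof.
rewrite {1}(poly_expand (size_Hc n)) mulr_sumr Lc_sum; apply: eq_bigr => i _.
by rewrite -scalerAr LcZ [Hc m * _]mulrC.
Qed.

Lemma mainA n m : (n * t < m)%N -> Lc (Hc m * Hc n) = 0.
Proof.
move=> h; rewrite Lc_prod big1 // => i _; rewrite TcA ?mulr0 //.
by rewrite (leq_ltn_trans _ h) // mulnC leq_mul2r -ltnS ltn_ord orbT.
Qed.

Lemma mainB n : Lc (Hc (n * t) * Hc n) = (s%:R / 2%:R) ^+ n * ((n * t)`!)%:R.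
Proof.
rewrite Lc_prod big_ord_recr /= big1 ?add0r.
  by rewrite Hc_lead mul1r TcB.
move=> i _; rewrite TcA ?mulr0 //.
by rewrite mulnC ltn_pmul2r.
Qed.

End Alg.

Local Open Scope ring_scope.

Section Bridge.
Variable t : nat.
Hypothesis ht : (0 < t)%N.
Local Notation s := t.+1.

Lemma Fams_Ac j k : (#|Fams j t k|)%:R = Ac t j k.
Proof. by rewrite /Ac -(count_fam j ht k) natrM mulfK // den_neq0. Qed.

Lemma fam_le j (F : {set {set {set 'I_j}}}) : is_tfamily t F -> (#|F| <= j)%N.
Proof.
move=> fF; apply: leq_trans (fam_bound ht fF).
by rewrite leq_pmulr.
Qed.

Lemma mu_muc j : (mu t j)%:R = muc t j.
Proof.
rewrite /mu (@card_fib _ _ _ [set: 'I_j.+1] (fun F : {set {set {set 'I_j}}} => inord #|F| : 'I_j.+1)) //.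
rewrite natr_sum /muc; apply: eq_big => [k|k _]; first by rewrite inE.
rewrite -Fams_Ac -natrM; congr (_%:R).
case: eqP => [ek|nk].
  rewrite mul1n; apply: eq_card => F; rewrite !inE.
  case fF: (is_tfamily t F) => //=; rewrite (covers_iff ht fF).
  have hF := fam_le fF.
  apply/andP/eqP => [[_ /eqP /(congr1 val)]|e]; first by rewrite /= inordK.
  split; first by rewrite e ek.
  by apply/eqP/val_inj; rewrite /= inordK // e.
rewrite mul0n; apply/eqP; rewrite cards_eq0; apply/eqP/setP => F; rewrite !inE.
case fF: (is_tfamily t F) => //=; rewrite (covers_iff ht fF).
have hF := fam_le fF.
apply/negbTE/negP => /andP[/eqP e /eqP /(congr1 val)]; rewrite /= inordK // => e2.
by apply: nk; rewrite -e2.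
Qed.

Lemma LH_Lc p : LH t p = Lc t p.
Proof. by apply: eq_bigr => i _; rewrite mu_muc. Qed.

Lemma Hpoly_Hc m : Hpoly t m = Hc t m.
Proof.
rewrite /Hpoly (partition_big (fun F : {set {set {set 'I_m}}} => inord #|F| : 'I_m.+1) predT) //=.
apply: eq_bigr => k _.
rewrite (eq_bigr (fun _ => (-1) ^+ k *: 'X^(m - k * s))); last first.
  move=> F /andP[fF /eqP e]; have hF := fam_le fF.
  by rewrite -e inordK // mulnC.
rewrite sumr_const /term -scaler_nat scalerA mulrC; congr (_ *: _).
congr (_ * _); rewrite -Fams_Ac; congr (_%:R); apply: eq_card => F.
rewrite !inE unfold_in /=; case fF: (is_tfamily t F) => //=.
have hF := fam_le fF.
apply/eqP/eqP => [<-|e]; first by rewrite inordK.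
by apply/val_inj; rewrite /= inordK // e.
Qed.

End Bridge.

Theorem mainTheorem13 (t : nat) (ht : (1 <= t)%N) :
  (forall n m : nat, (n * t < m)%N -> LH t (Hpoly t m * Hpoly t n) = 0) /\
  (forall n : nat,
     LH t (Hpoly t (n * t) * Hpoly t n) = ((t.+1)%:R / 2%:R) ^+ n * ((n * t)`!)%:R).
Proof.
split => [n m h | n]; rewrite !Hpoly_Hc // LH_Lc //.
  exact: mainA.
exact: mainB.
Qed.
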